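(* Let $f\colon X\to X$ be an expansive homeomorphism of a compact metric space $X$. Then there are $\delta>0$ and a continuous function $\mathcal L\colon\mathcal K_\delta(X)\to\mathbb{R}$ such that: 1. $\mathcal L(A)\ge0$ for all $A\in\mathcal K_\delta(X)$, with equality if and only if $A$ is a singleton; 2. $\ddot{\mathcal L}=\mathcal L$, i.e. $\mathcal L(f(A))-2\mathcal L(A)+\mathcal L(f^{-1}(A))=\mathcal L(A)$ whenever $f(A),A,f^{-1}(A)\in\mathcal K_\delta(X)$.
   Context: A homeomorphism $f$ of a compact metric space $(X,\operatorname{dist})$ is expansive if there is $\delta>0$ such that $\operatorname{dist}(f^n(x),f^n(y))\le\delta$ for all $n\in\mathbb{Z}$ implies $x=y$. $\mathcal K(X)$ is the space of nonempty compact subsets of $X$ with the Hausdorff distance, and $\mathcal K_\delta(X)=\{A\in\mathcal K(X):\operatorname{diam}(A)\le\delta\}$. *)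

(* Defs.v *)
From Stdlib Require Import Reals List ZArith.
Open Scope R_scope.

Section Metric.
Context {X : Type}.
Variable d : X -> X -> R.

Definition is_metric : Prop :=
  (forall x y, 0 <= d x y) /\ (forall x y, d x y = 0 <-> x = y) /\
  (forall x y, d x y = d y x) /\ (forall x y z, d x z <= d x y + d y z).

Definition is_open (U : X -> Prop) : Prop :=
  forall x, U x -> exists r, 0 < r /\ forall y, d x y < r -> U y.

Definition is_compact (K : X -> Prop) : Prop :=
  forall (I : Type) (U : I -> X -> Prop),
    (forall i, is_open (U i)) ->
    (forall x, K x -> exists i, U i x) ->
    exists l : list I, forall x, K x -> exists i, In i l /\ U i x.

Definition continuous_map (f : X -> X) : Prop :=
  forall x eps, 0 < eps -> exists del, 0 < del /\
    forall y, d x y < del -> d (f x) (f y) < eps.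

Definition homeomorphism (f g : X -> X) : Prop :=
  continuous_map f /\ continuous_map g /\
  (forall x, g (f x) = x) /\ (forall x, f (g x) = x).

Definition iterZ (f g : X -> X) (n : Z) : X -> X :=
  match n with
  | Z0 => fun x => x
  | Zpos p => Nat.iter (Pos.to_nat p) f
  | Zneg p => Nat.iter (Pos.to_nat p) g
  end.

Definition expansive (f g : X -> X) : Prop :=
  exists delta, 0 < delta /\ forall x y,
    (forall n : Z, d (iterZ f g n x) (iterZ f g n y) <= delta) -> x = y.

Definition in_KX (A : X -> Prop) : Prop := (exists x, A x) /\ is_compact A.

Definition diam_le (A : X -> Prop) (delta : R) : Prop :=
  forall a b, A a -> A b -> d a b <= delta.

Definition in_Kdelta (delta : R) (A : X -> Prop) : Prop :=
  in_KX A /\ diam_le A delta.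

Definition in_nbhd (A B : X -> Prop) (r : R) : Prop :=
  forall a, A a -> exists b, B b /\ d a b <= r.

(* Hausdorff distance H(A,B) = inf { r >= 0 | A ⊆ N_r(B) and B ⊆ N_r(A) };
   hausdorff_lt A B eta  unfolds  H(A,B) < eta. *)
Definition hausdorff_lt (A B : X -> Prop) (eta : R) : Prop :=
  exists r, 0 <= r /\ r < eta /\ in_nbhd A B r /\ in_nbhd B A r.

Definition continuous_on_Kdelta (delta : R) (L : (X -> Prop) -> R) : Prop :=
  forall A eps, in_Kdelta delta A -> 0 < eps -> exists eta, 0 < eta /\
    forall B, in_Kdelta delta B -> hausdorff_lt A B eta -> Rabs (L B - L A) < eps.

Definition singleton (A : X -> Prop) : Prop :=
  exists x, forall y, A y <-> y = x.

Definition image (h : X -> X) (A : X -> Prop) : X -> Prop :=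
  fun y => exists a, A a /\ y = h a.

End Metric.

(* Main.v *)
Require Import Defs.
From Stdlib Require Import Reals List ZArith Lra Lia ClassicalEpsilon.
From Coquelicot Require Import Coquelicot.
Open Scope R_scope.

Lemma Series_zero : Series (fun _ : nat => 0) = 0.
Proof.
  rewrite (Series_ext _ (fun n => 0 * 0)); [|intros; ring].
  rewrite Series_scal_l. ring.
Qed.

Section Ser.
Variable lam : R.
Hypothesis Hl0 : 0 < lam.
Hypothesis Hl1 : lam < 1.

Definition SS (u : nat -> R) := Series (fun n => lam ^ n * u n).

Lemma pow_pos' n : 0 < lam ^ n.
Proof. apply pow_lt; lra. Qed.

Lemma SS_ex u : (forall n, 0 <= u n <= 1) -> ex_series (fun n => lam ^ n * u n).
Proof.
  intros Hu. apply (@ex_series_le R_AbsRing R_CompleteNormedModule) with (b := fun n => lam ^ n).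
  - intros n. change (norm (lam ^ n * u n)) with (Rabs (lam ^ n * u n)).
    specialize (Hu n). pose proof (pow_pos' n).
    rewrite Rabs_pos_eq by nra. nra.
  - apply ex_series_geom. rewrite Rabs_pos_eq; lra.
Qed.

Lemma SS_bounds u : (forall n, 0 <= u n <= 1) -> 0 <= SS u <= / (1 - lam).
Proof.
  intros Hu. split.
  - rewrite <- Series_zero. unfold SS. apply Series_le.
    + intros n. specialize (Hu n). pose proof (pow_pos' n). split; [lra|nra].
    + apply SS_ex; auto.
  - rewrite <- (is_series_unique _ _ (is_series_geom lam ltac:(rewrite Rabs_pos_eq; lra))).
    unfold SS. apply Series_le.
    + intros n. specialize (Hu n). pose proof (pow_pos' n). split; nra.
    + apply ex_series_geom. rewrite Rabs_pos_eq; lra.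
Qed.

Lemma SS_incr u : (forall n, 0 <= u n <= 1) -> SS u = u 0%nat + lam * SS (fun n => u (S n)).
Proof.
  intros Hu. unfold SS. rewrite Series_incr_1 by (apply SS_ex; auto).
  rewrite <- Series_scal_l. simpl. f_equal; [ring|].
  apply Series_ext. intros n. simpl. ring.
Qed.

Lemma SS_ext u v : (forall n, u n = v n) -> SS u = SS v.
Proof. intros H. unfold SS. apply Series_ext. intros; rewrite H; auto. Qed.

Lemma SS_term u n : (forall n, 0 <= u n <= 1) -> lam ^ n * u n <= SS u.
Proof.
  revert u. induction n as [|n IH]; intros u Hu.
  - rewrite SS_incr by auto. simpl.
    pose proof (SS_bounds (fun n => u (S n)) ltac:(intros; apply Hu)). nra.
  - rewrite SS_incr by auto. simpl.
    specialize (IH (fun n => u (S n)) ltac:(intros; apply Hu)). simpl in IH.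
    pose proof (Hu 0%nat).
    replace (lam * lam ^ n * u (S n)) with (lam * (lam ^ n * u (S n))) by ring. nra.
Qed.

Lemma SS_close N eps u v : 0 <= eps ->
  (forall n, 0 <= u n <= 1) -> (forall n, 0 <= v n <= 1) ->
  (forall n, (n < N)%nat -> Rabs (u n - v n) <= eps) ->
  Rabs (SS u - SS v) <= eps / (1 - lam) + lam ^ N / (1 - lam).
Proof.
  revert u v. induction N as [|N IH]; intros u v He Hu Hv Hc.
  - pose proof (SS_bounds u Hu). pose proof (SS_bounds v Hv). simpl.
    assert (0 <= eps / (1 - lam)) by (apply Rdiv_le_0_compat; lra).
    unfold Rdiv. rewrite Rmult_1_l. apply Rabs_le. lra.
  - rewrite (SS_incr u Hu), (SS_incr v Hv).
    specialize (IH (fun n => u (S n)) (fun n => v (S n)) He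
      ltac:(intros; apply Hu) ltac:(intros; apply Hv)
      ltac:(intros n Hn; apply Hc; lia)).
    assert (H0 : Rabs (u 0%nat - v 0%nat) <= eps) by (apply Hc; lia).
    replace (u 0%nat + lam * SS (fun n => u (S n)) - (v 0%nat + lam * SS (fun n => v (S n))))
      with ((u 0%nat - v 0%nat) + lam * (SS (fun n => u (S n)) - SS (fun n => v (S n)))) by ring.
    eapply Rle_trans; [apply Rabs_triang|]. rewrite Rabs_mult, (Rabs_pos_eq lam) by lra.
    assert (Heq : eps / (1 - lam) + lam ^ S N / (1 - lam) =
       eps + lam * (eps / (1 - lam) + lam ^ N / (1 - lam))) by (simpl; field; lra).
    rewrite Heq. nra.
Qed.

End Ser.

Definition kk (delta t : R) := Rmin 1 (Rmax 0 (t - delta)).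

Lemma kk_bounds delta t : 0 <= kk delta t <= 1.
Proof. unfold kk, Rmin, Rmax. repeat destruct Rle_dec; lra. Qed.

Lemma kk_lip delta s t : Rabs (kk delta s - kk delta t) <= Rabs (s - t).
Proof. unfold kk, Rmin, Rmax. repeat destruct Rle_dec; apply Rabs_le;
  unfold Rabs; destruct Rcase_abs; lra. Qed.

Lemma kk_zero delta t : kk delta t = 0 <-> t <= delta.
Proof. unfold kk, Rmin, Rmax. repeat destruct Rle_dec; lra. Qed.

Definition sup01 (S : R -> Prop) : R := real (Lub_Rbar S).

Lemma sup01_ub S v : (forall v, S v -> 0 <= v <= 1) -> S v -> v <= sup01 S.
Proof.
  intros Hb Hv. destruct (Lub_Rbar_correct S) as [Hub Hl]. unfold sup01.
  pose proof (Hub v Hv) as H1.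
  assert (H2 : Rbar_le (Lub_Rbar S) 1) by (apply Hl; intros x Hx; simpl; apply Hb; auto).
  destruct (Lub_Rbar S); simpl in *; tauto.
Qed.

Lemma sup01_le S u : (forall v, S v -> 0 <= v <= 1) -> (exists v, S v) ->
  (forall v, S v -> v <= u) -> sup01 S <= u.
Proof.
  intros Hb [w Hw] Hu. destruct (Lub_Rbar_correct S) as [Hub Hl]. unfold sup01.
  assert (H2 : Rbar_le (Lub_Rbar S) u) by (apply Hl; intros x Hx; simpl; apply Hu; auto).
  pose proof (Hub w Hw) as H1.
  destruct (Lub_Rbar S); simpl in *; tauto.
Qed.

Lemma sup01_bounds S : (forall v, S v -> 0 <= v <= 1) -> 0 <= sup01 S <= 1.
Proof.
  intros Hb. destruct (Lub_Rbar_correct S) as [Hub Hl]. unfold sup01.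
  assert (H2 : Rbar_le (Lub_Rbar S) 1) by (apply Hl; intros x Hx; simpl; apply Hb; auto).
  destruct (Lub_Rbar S) eqn:E; simpl in *; try lra; try tauto.
  split; auto.
  destruct (Classical_Prop.classic (exists v, S v)) as [[v Hv]|Hn].
  - pose proof (Hub v Hv). simpl in H. pose proof (Hb v Hv). lra.
  - exfalso. apply (Hl m_infty). intros x Hx. exfalso; apply Hn; eauto.
Qed.

Lemma sup01_eq S1 S2 : (forall x, S1 x <-> S2 x) -> sup01 S1 = sup01 S2.
Proof. intros H. unfold sup01. rewrite (Lub_Rbar_eqset S1 S2 H). auto. Qed.

Section M.
Variable X : Type.
Variable d : X -> X -> R.
Variables f g : X -> X.
Hypothesis Hm : is_metric d.
Hypothesis Hh : homeomorphism d f g.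

Lemma d_sym x y : d x y = d y x. Proof. apply Hm. Qed.
Lemma d_tri x y z : d x z <= d x y + d y z. Proof. apply Hm. Qed.
Lemma d_pos x y : 0 <= d x y. Proof. apply Hm. Qed.
Lemma d_refl x : d x x = 0. Proof. apply Hm. auto. Qed.

Lemma cont_comp (F G : X -> X) : continuous_map d F -> continuous_map d G ->
  continuous_map d (fun x => F (G x)).
Proof.
  intros HF HG x eps He. destruct (HF (G x) eps He) as [d1 [Hd1 H1]].
  destruct (HG x d1 Hd1) as [d2 [Hd2 H2]]. exists d2. split; auto.
Qed.

Lemma cont_iter (F : X -> X) n : continuous_map d F -> continuous_map d (Nat.iter n F).
Proof.
  intros HF. induction n as [|n IH]; simpl.
  - intros x eps He. exists eps. split; auto.
  - apply (cont_comp F (Nat.iter n F)); auto.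
Qed.

Lemma cont_iterZ k : continuous_map d (iterZ f g k).
Proof.
  destruct Hh as [Hf [Hg _]]. destruct k; simpl.
  - intros x eps He. exists eps. split; auto.
  - apply cont_iter; auto.
  - apply cont_iter; auto.
Qed.

Lemma iterZ_pos n x : iterZ f g (Z.of_nat n) x = Nat.iter n f x.
Proof. destruct n; simpl; auto. rewrite SuccNat2Pos.id_succ. auto. Qed.

Lemma iterZ_neg n x : iterZ f g (- Z.of_nat n) x = Nat.iter n g x.
Proof. destruct n; simpl; auto. rewrite SuccNat2Pos.id_succ. auto. Qed.

Lemma iterZ_f k x : iterZ f g k (f x) = iterZ f g (k + 1) x.
Proof.
  destruct Hh as [_ [_ [Hgf Hfg]]].
  destruct (Z_le_gt_dec 0 k) as [Hk|Hk].
  - replace k with (Z.of_nat (Z.to_nat k)) by lia.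
    replace (Z.of_nat (Z.to_nat k) + 1)%Z with (Z.of_nat (S (Z.to_nat k))) by lia.
    rewrite !iterZ_pos. rewrite Nat.iter_succ_r. auto.
  - replace k with (- Z.of_nat (S (Z.to_nat (- k - 1))))%Z by lia.
    replace (- Z.of_nat (S (Z.to_nat (- k - 1))) + 1)%Z with (- Z.of_nat (Z.to_nat (- k - 1)))%Z by lia.
    rewrite !iterZ_neg. rewrite Nat.iter_succ_r, Hgf. auto.
Qed.

Lemma iterZ_g k x : iterZ f g k (g x) = iterZ f g (k - 1) x.
Proof.
  destruct Hh as [_ [_ [Hgf Hfg]]].
  rewrite <- (Hfg x) at 2. rewrite iterZ_f. f_equal. lia.
Qed.

Lemma unif_cont (A : X -> Prop) (F : X -> X) eps : is_compact d A -> continuous_map d F -> 0 < eps ->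
  exists eta, 0 < eta /\ forall a y, A a -> d a y < eta -> d (F a) (F y) < eps.
Proof.
  intros HA HF He.
  set (I := {a : X | A a}).
  assert (Hr : forall i : I, {r : R | 0 < r /\ forall y, d (proj1_sig i) y < r -> d (F (proj1_sig i)) (F y) < eps / 2}).
  { intros i. apply constructive_indefinite_description. apply HF. lra. }
  set (r := fun i => proj1_sig (Hr i)).
  assert (Hrp : forall i, 0 < r i /\ forall y, d (proj1_sig i) y < r i -> d (F (proj1_sig i)) (F y) < eps / 2).
  { intros i. exact (proj2_sig (Hr i)). }
  destruct (HA I (fun i y => d (proj1_sig i) y < r i / 2)) as [l Hl].
  - intros i x Hx. exists (r i / 2 - d (proj1_sig i) x). split; [lra|].
    intros y Hy. pose proof (d_tri (proj1_sig i) x y). lra.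
  - intros x Hx. exists (exist _ x Hx). change (d x x < r (exist _ x Hx) / 2). rewrite d_refl. pose proof (proj1 (Hrp (exist _ x Hx))). lra.
  - set (eta := fold_right (fun i acc => Rmin (r i / 2) acc) 1 l).
    assert (Hpos : 0 < eta).
    { unfold eta. clear Hl. induction l as [|i l IH]; simpl; [lra|].
      apply Rmin_glb_lt; auto. pose proof (proj1 (Hrp i)). lra. }
    assert (Hle : forall i, In i l -> eta <= r i / 2).
    { unfold eta. clear Hl Hpos. induction l as [|j l IH]; simpl; [tauto|].
      intros i [<-|Hi]. apply Rmin_l. eapply Rle_trans; [apply Rmin_r|]. auto. }
    exists eta. split; auto. intros a y Ha Hay.
    destruct (Hl a Ha) as [i [Hi Hia]]. specialize (Hle i Hi).
    destruct (Hrp i) as [_ Hc].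
    assert (H1 : d (F (proj1_sig i)) (F a) < eps / 2) by (apply Hc; lra).
    assert (H2 : d (F (proj1_sig i)) (F y) < eps / 2).
    { apply Hc. pose proof (d_tri (proj1_sig i) a y). lra. }
    pose proof (d_tri (F a) (F (proj1_sig i)) (F y)). rewrite d_sym in H1. lra.
Qed.

End M.

Section P.
Variable X : Type.
Variable d : X -> X -> R.
Variables f g : X -> X.
Hypothesis Hm : is_metric d.
Hypothesis Hh : homeomorphism d f g.
Variable delta : R.
Hypothesis Hdelta : 0 < delta.

Definition psiS k (A : X -> Prop) := fun v => exists a b, A a /\ A b /\
  v = kk delta (d (iterZ f g k a) (iterZ f g k b)).
Definition psi k A := sup01 (psiS k A).

Lemma psiS_b k A : forall v, psiS k A v -> 0 <= v <= 1.
Proof. intros v [a [b [_ [_ ->]]]]. apply kk_bounds. Qed.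

Lemma psi_bounds k A : 0 <= psi k A <= 1.
Proof. apply sup01_bounds, psiS_b. Qed.

Lemma psi_f k A : psi k (image f A) = psi (k + 1) A.
Proof.
  apply sup01_eq. intros v. split.
  - intros [a [b [[a' [Ha' ->]] [[b' [Hb' ->]] ->]]]]. exists a', b'.
    rewrite !(iterZ_f X d f g Hh). auto.
  - intros [a [b [Ha [Hb ->]]]]. exists (f a), (f b).
    split; [exists a; auto|]. split; [exists b; auto|].
    rewrite !(iterZ_f X d f g Hh). auto.
Qed.

Lemma psi_g k A : psi k (image g A) = psi (k - 1) A.
Proof.
  apply sup01_eq. intros v. split.
  - intros [a [b [[a' [Ha' ->]] [[b' [Hb' ->]] ->]]]]. exists a', b'.
    rewrite !(iterZ_g X d f g Hh). auto.
  - intros [a [b [Ha [Hb ->]]]]. exists (g a), (g b).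
    split; [exists a; auto|]. split; [exists b; auto|].
    rewrite !(iterZ_g X d f g Hh). auto.
Qed.

Lemma psi_zero k A : (exists x, A x) ->
  (psi k A = 0 <-> forall a b, A a -> A b -> d (iterZ f g k a) (iterZ f g k b) <= delta).
Proof.
  intros [x Hx]. split.
  - intros H0 a b Ha Hb. apply kk_zero.
    assert (H1 : kk delta (d (iterZ f g k a) (iterZ f g k b)) <= psi k A).
    { apply sup01_ub; [apply psiS_b|]. exists a, b; auto. }
    pose proof (kk_bounds delta (d (iterZ f g k a) (iterZ f g k b))). lra.
  - intros H. pose proof (psi_bounds k A).
    assert (psi k A <= 0).
    { apply sup01_le; [apply psiS_b| |].
      - exists (kk delta (d (iterZ f g k x) (iterZ f g k x))). exists x, x; auto.
      - intros v [a [b [Ha [Hb ->]]]]. right. apply kk_zero. auto. }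
    lra.
Qed.

Lemma psi0_Kd A : in_Kdelta d delta A -> psi 0 A = 0.
Proof.
  intros [[Hne _] Hdiam]. apply (proj2 (psi_zero 0 A Hne)). intros a b Ha Hb. simpl. apply Hdiam; auto.
Qed.

Lemma hl_mono (A B : X -> Prop) e1 e2 : e1 <= e2 -> hausdorff_lt d A B e1 -> hausdorff_lt d A B e2.
Proof. intros He [r [H1 [H2 H3]]]. exists r. repeat split; try lra; tauto. Qed.

Lemma dist4 a1 a2 b1 b2 : Rabs (d a1 a2 - d b1 b2) <= d a1 b1 + d a2 b2.
Proof.
  pose proof (d_tri X d Hm a1 b1 a2). pose proof (d_tri X d Hm b1 b2 a2).
  pose proof (d_tri X d Hm b1 a1 b2). pose proof (d_tri X d Hm a1 a2 b2).
  rewrite (d_sym X d Hm b1 a1) in *. rewrite (d_sym X d Hm b2 a2) in *.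
  apply Rabs_le. lra.
Qed.

Lemma psi_cont k A eps : in_KX d A -> 0 < eps -> exists eta, 0 < eta /\
  forall B, hausdorff_lt d A B eta -> Rabs (psi k B - psi k A) <= eps.
Proof.
  intros [[x Hx] HA] He.
  destruct (unif_cont X d Hm A (iterZ f g k) (eps / 2) HA (cont_iterZ X d f g Hh k) ltac:(lra))
    as [eta [Heta Hu]].
  exists eta. split; auto. intros B [r [Hr0 [Hr [HAB HBA]]]].
  set (F := iterZ f g k).
  assert (HB : exists y, B y) by (destruct (HAB x Hx) as [y [Hy _]]; eauto).
  assert (Hclose : forall a1 a2 b1 b2, A a1 -> A a2 -> d a1 b1 <= r -> d a2 b2 <= r ->
     Rabs (kk delta (d (F a1) (F a2)) - kk delta (d (F b1) (F b2))) <= eps).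
  { intros a1 a2 b1 b2 Ha1 Ha2 H1 H2. eapply Rle_trans; [apply kk_lip|].
    eapply Rle_trans; [apply dist4|].
    pose proof (Hu a1 b1 Ha1 ltac:(lra)). pose proof (Hu a2 b2 Ha2 ltac:(lra)). unfold F. lra. }
  apply Rabs_le. split.
  - assert (psi k A <= psi k B + eps); [|lra].
    unfold psi at 1. apply sup01_le; [apply psiS_b| exists (kk delta (d (F x) (F x))); exists x, x; auto|].
    intros v [a1 [a2 [Ha1 [Ha2 ->]]]].
    destruct (HAB a1 Ha1) as [b1 [Hb1 Hd1]]. destruct (HAB a2 Ha2) as [b2 [Hb2 Hd2]].
    assert (kk delta (d (F b1) (F b2)) <= psi k B).
    { apply sup01_ub; [apply psiS_b|]. exists b1, b2; auto. }
    pose proof (Hclose a1 a2 b1 b2 Ha1 Ha2 Hd1 Hd2) as Hc. apply Rabs_le_between' in Hc.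
    unfold F in *. lra.
  - assert (psi k B <= psi k A + eps); [|lra].
    unfold psi at 1. apply sup01_le; [apply psiS_b| destruct HB as [y Hy]; exists (kk delta (d (F y) (F y))); exists y, y; auto|].
    intros v [b1 [b2 [Hb1 [Hb2 ->]]]].
    destruct (HBA b1 Hb1) as [a1 [Ha1 Hd1]]. destruct (HBA b2 Hb2) as [a2 [Ha2 Hd2]].
    rewrite (d_sym X d Hm) in Hd1, Hd2.
    assert (kk delta (d (F a1) (F a2)) <= psi k A).
    { apply sup01_ub; [apply psiS_b|]. exists a1, a2; auto. }
    pose proof (Hclose a1 a2 b1 b2 Ha1 Ha2 Hd1 Hd2) as Hc. apply Rabs_le_between' in Hc.
    unfold F in *. lra.
Qed.

End P.

Section Q.
Variable X : Type.
Variable d : X -> X -> R.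
Variables f g : X -> X.
Hypothesis Hm : is_metric d.
Hypothesis Hh : homeomorphism d f g.
Variable delta : R.
Hypothesis Hdelta : 0 < delta.
Variable lam : R.
Hypothesis Hl0 : 0 < lam.
Hypothesis Hl1 : lam < 1.
Hypothesis Hlq : lam * lam - 3 * lam + 1 = 0.

Let ps k A := psi X d f g delta k A.
Definition PP A := SS lam (fun n => psi X d f g delta (Z.of_nat n) A).
Definition QQ A := SS lam (fun n => psi X d f g delta (- Z.of_nat n) A).
Definition LL A := PP A + QQ A.

Lemma psb k A : 0 <= psi X d f g delta k A <= 1.
Proof. apply psi_bounds. Qed.

Lemma LL_rec A : in_Kdelta d delta (image f A) -> in_Kdelta d delta A ->
  in_Kdelta d delta (image g A) ->
  LL (image f A) - 2 * LL A + LL (image g A) = LL A.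
Proof.
  intros Hf HA Hg.
  assert (H0 : psi X d f g delta 0 A = 0) by (apply psi0_Kd; auto).
  assert (H1 : psi X d f g delta 1 A = 0).
  { rewrite <- (psi0_Kd X d f g delta (image f A) Hf). rewrite psi_f; auto. }
  assert (Hm1 : psi X d f g delta (-1) A = 0).
  { rewrite <- (psi0_Kd X d f g delta (image g A) Hg). rewrite psi_g; auto. }
  assert (EPf : PP A = lam * PP (image f A)).
  { unfold PP. rewrite SS_incr by (auto; intros; apply psb). simpl Z.of_nat. rewrite H0, Rplus_0_l.
    f_equal. apply SS_ext. intros n. rewrite psi_f by auto. f_equal. lia. }
  assert (EQf : QQ (image f A) = lam * QQ A).
  { unfold QQ. rewrite SS_incr by (auto; intros; apply psb). simpl Z.of_nat.
    rewrite psi_f by auto. simpl (- 0 + 1)%Z. rewrite H1, Rplus_0_l.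
    f_equal. apply SS_ext. intros n. rewrite psi_f by auto. f_equal. lia. }
  assert (EPg : PP (image g A) = lam * PP A).
  { unfold PP. rewrite SS_incr by (auto; intros; apply psb). simpl Z.of_nat.
    rewrite psi_g by auto. simpl (0 - 1)%Z. rewrite Hm1, Rplus_0_l.
    f_equal. apply SS_ext. intros n. rewrite psi_g by auto. f_equal. lia. }
  assert (EQg : QQ A = lam * QQ (image g A)).
  { unfold QQ. rewrite SS_incr by (auto; intros; apply psb). simpl Z.of_nat. simpl (- 0)%Z.
    rewrite H0, Rplus_0_l.
    f_equal. apply SS_ext. intros n. rewrite psi_g by auto. f_equal. lia. }
  unfold LL. rewrite EQf, EPg.
  apply (Rmult_eq_reg_l lam); [|lra].
  replace (lam * (PP (image f A) + lam * QQ A - 2 * (PP A + QQ A) + (lam * PP A + QQ (image g A))))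
    with (lam * PP (image f A) + lam * QQ (image g A) + lam * lam * (QQ A + PP A) - 2 * lam * (PP A + QQ A)) by ring.
  rewrite <- EPf, <- EQg. transitivity ((lam*lam-3*lam+1)*(PP A + QQ A) + lam*(PP A+QQ A)); [ring| rewrite Hlq; ring].
Qed.


Lemma SS_zero_fun u : (forall n, u n = 0) -> SS lam u = 0.
Proof.
  intros H. unfold SS. rewrite <- Series_zero. apply Series_ext. intros n. rewrite H. ring.
Qed.

Lemma PP_b A : 0 <= PP A. Proof. apply SS_bounds; auto. intros; apply psb. Qed.
Lemma QQ_b A : 0 <= QQ A. Proof. apply SS_bounds; auto. intros; apply psb. Qed.

Hypothesis Hexp : forall x y, (forall n : Z, d (iterZ f g n x) (iterZ f g n y) <= delta) -> x = y.

Lemma LL_zero A : in_Kdelta d delta A -> (LL A = 0 <-> singleton A).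
Proof.
  intros [[Hne HAc] Hdiam]. unfold LL. pose proof (PP_b A). pose proof (QQ_b A). split.
  - intros HL.
    assert (Hp : forall k, psi X d f g delta k A = 0).
    { intros k.
      assert (Hgen : forall n, psi X d f g delta (Z.of_nat n) A = 0 /\ psi X d f g delta (- Z.of_nat n) A = 0).
      { intros n. pose proof (SS_term lam Hl0 Hl1 (fun n => psi X d f g delta (Z.of_nat n) A) n ltac:(intros; apply psb)).
        pose proof (SS_term lam Hl0 Hl1 (fun n => psi X d f g delta (- Z.of_nat n) A) n ltac:(intros; apply psb)).
        fold (PP A) in H1. fold (QQ A) in H2. simpl in H1, H2.
        pose proof (pow_pos' lam Hl0 n). pose proof (psb (Z.of_nat n) A). pose proof (psb (- Z.of_nat n) A).
        split; nra. }
      destruct (Z_le_gt_dec 0 k).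
      - replace k with (Z.of_nat (Z.to_nat k)) by lia. apply Hgen.
      - replace k with (- Z.of_nat (Z.to_nat (- k)))%Z by lia. apply Hgen. }
    destruct Hne as [x Hx]. exists x. intros y. split; [|intros ->; auto].
    intros Hy. apply Hexp. intros n. apply (proj1 (psi_zero X d f g delta n A (ex_intro _ x Hx)) (Hp n)); auto.
  - intros [x Hx].
    assert (Hp : forall k, psi X d f g delta k A = 0).
    { intros k. apply (proj2 (psi_zero X d f g delta k A Hne)). intros a b Ha Hb.
      apply Hx in Ha. apply Hx in Hb. subst. rewrite d_refl; auto. lra. }
    unfold PP, QQ. rewrite !SS_zero_fun; auto. ring.
Qed.

Lemma multi_cont A eps N : in_KX d A -> 0 < eps -> exists eta, 0 < eta /\
  forall B, hausdorff_lt d A B eta -> forall n, (n < N)%nat ->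
    Rabs (psi X d f g delta (Z.of_nat n) B - psi X d f g delta (Z.of_nat n) A) <= eps /\
    Rabs (psi X d f g delta (- Z.of_nat n) B - psi X d f g delta (- Z.of_nat n) A) <= eps.
Proof.
  intros HA He. induction N as [|N IH].
  - exists 1. split; [lra|]. intros; lia.
  - destruct IH as [e0 [He0 H0]].
    destruct (psi_cont X d f g Hm Hh delta (Z.of_nat N) A eps HA He) as [e1 [He1 H1]].
    destruct (psi_cont X d f g Hm Hh delta (- Z.of_nat N) A eps HA He) as [e2 [He2 H2]].
    exists (Rmin e0 (Rmin e1 e2)). split.
    { apply Rmin_glb_lt; auto. apply Rmin_glb_lt; auto. }
    intros B HB n Hn.
    assert (Hm0 := Rmin_l e0 (Rmin e1 e2)). assert (Hm1 := Rmin_r e0 (Rmin e1 e2)).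
    assert (Hm2 := Rmin_l e1 e2). assert (Hm3 := Rmin_r e1 e2).
    destruct (Nat.eq_dec n N) as [->|Hne].
    + split; [apply H1|apply H2]; apply (hl_mono X d A B (Rmin e0 (Rmin e1 e2))); auto; lra.
    + apply H0; [|lia]. apply (hl_mono X d A B (Rmin e0 (Rmin e1 e2))); auto; lra.
Qed.

Lemma LL_cont : continuous_on_Kdelta d delta LL.
Proof.
  intros A eps HA He.
  destruct (pow_lt_1_zero lam ltac:(rewrite Rabs_pos_eq; lra) (eps * (1 - lam) / 8) ltac:(apply Rdiv_lt_0_compat; nra)) as [N HN].
  specialize (HN N (le_n N)). rewrite Rabs_pos_eq in HN by (apply pow_le; lra).
  set (e' := eps * (1 - lam) / 8).
  destruct (multi_cont A e' N (proj1 HA) ltac:(unfold e'; apply Rdiv_lt_0_compat; nra)) as [eta [Heta Hc]].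
  exists eta. split; auto. intros B HB Hh'.
  pose proof (Hc B Hh') as Hc'.
  assert (HP : Rabs (PP B - PP A) <= e' / (1 - lam) + lam ^ N / (1 - lam)).
  { apply SS_close; auto. unfold e'. apply Rlt_le, Rdiv_lt_0_compat; nra.
    intros; apply psb. intros; apply psb. intros n Hn. apply (Hc' n Hn). }
  assert (HQ : Rabs (QQ B - QQ A) <= e' / (1 - lam) + lam ^ N / (1 - lam)).
  { apply SS_close; auto. unfold e'. apply Rlt_le, Rdiv_lt_0_compat; nra.
    intros; apply psb. intros; apply psb. intros n Hn. apply (Hc' n Hn). }
  unfold LL. replace (PP B + QQ B - (PP A + QQ A)) with ((PP B - PP A) + (QQ B - QQ A)) by ring.
  eapply Rle_lt_trans; [apply Rabs_triang|].
  assert (Hb : e' / (1 - lam) + lam ^ N / (1 - lam) < eps / 2).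
  { unfold e'. apply (Rmult_lt_reg_r (1 - lam)); [lra|].
    replace ((eps * (1 - lam) / 8 / (1 - lam) + lam ^ N / (1 - lam)) * (1 - lam))
      with (eps * (1 - lam) / 8 + lam ^ N) by (field; lra).
    unfold e' in HN. nra. }
  lra.
Qed.

End Q.

Theorem mainTheorem17 (X : Type) (d : X -> X -> R) (f g : X -> X)
  (Hmetric : is_metric d)
  (Hcompact : is_compact d (fun _ => True))
  (Hhomeo : homeomorphism d f g)
  (Hexp : expansive d f g) :
  exists (delta : R) (L : (X -> Prop) -> R),
    0 < delta /\
    continuous_on_Kdelta d delta L /\
    (forall A, in_Kdelta d delta A -> 0 <= L A /\ (L A = 0 <-> singleton A)) /\
    (forall A, in_Kdelta d delta (image f A) -> in_Kdelta d delta A ->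
               in_Kdelta d delta (image g A) ->
               L (image f A) - 2 * L A + L (image g A) = L A).
Proof.
  destruct Hexp as [c [Hc Hexpc]].
  set (lam := (3 - sqrt 5) / 2).
  assert (Hs : sqrt 5 * sqrt 5 = 5) by (apply sqrt_sqrt; lra).
  assert (Hs0 : 0 <= sqrt 5) by apply sqrt_pos.
  assert (Hl0 : 0 < lam) by (unfold lam; nra).
  assert (Hl1 : lam < 1) by (unfold lam; nra).
  assert (Hlq : lam * lam - 3 * lam + 1 = 0) by (unfold lam; nra).
  exists c, (LL X d f g c lam). split; [auto|]. split.
  { apply LL_cont; auto. }
  split.
  - intros A HA. split.
    + unfold LL. pose proof (PP_b X d f g c lam Hl0 Hl1 A). pose proof (QQ_b X d f g c lam Hl0 Hl1 A). lra.
    + apply (LL_zero X d f g Hmetric c Hc lam Hl0 Hl1 Hexpc A HA).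
  - intros A H1 H2 H3. apply (LL_rec X d f g Hhomeo c lam Hl0 Hl1 Hlq A H1 H2 H3).
Qed.
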